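(* Consider the predator–prey system with predator-only harvesting $$\dot X=(1-Y)X,\qquad \dot Y=(X-U)Y,$$ on the open quadrant $\{(X,Y): X>0,\ Y>0\}$, under the feedback $U=Y$. Define $$V(X,Y)=\Psi(X)+\Psi(Y)+\Psi(1/X)+\Psi(Y/X)=\frac{(X-1)^2}{X}+Y-1-\ln Y+\frac{Y}{X}-1-\ln\!\Big(\frac{Y}{X}\Big).$$ Then $V$ is positive definite with respect to the equilibrium $(X,Y)=(1,1)$ (i.e. $V(1,1)=0$ and $V>0$ elsewhere on the quadrant), radially unbounded on the quadrant (i.e. $V(X,Y)\to\infty$ as $(X,Y)$ approaches the boundary $\{X=0\}\cup\{Y=0\}$ or as $X+Y\to\infty$), and along the closed-loop solutions $$\dot V=-\frac{(X-1)^2}{X}-(Y-1)^2,$$ which is negative definite on the quadrant. Hence $V$ is a strict Lyapunov function (strict CLF) for the closed loop on $\{X>0,Y>0\}$.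
   Context: $\Psi(S)=S-1-\ln S$ for $S>0$ (the Volterra Lyapunov building block); $\Psi(1)=0$ and $\Psi(S)>0$ for $S\neq1$. $X$ is the prey concentration, $Y$ the predator concentration, $U$ the harvesting rate. *)

(* Defs.v *)
From Stdlib Require Import Reals.
Open Scope R_scope.

Definition Psi (S : R) : R := S - 1 - ln S.

Definition V (X Y : R) : R := Psi X + Psi Y + Psi (/ X) + Psi (Y / X).

Definition fX (X Y : R) : R := (1 - Y) * X.
Definition fY (X Y : R) : R := (X - Y) * Y.

Definition Vdot (X Y : R) : R := - ((X - 1) ^ 2 / X) - (Y - 1) ^ 2.

(* Main.v *)
Require Import Defs.
From Stdlib Require Import Reals Lra.
Open Scope R_scope.
Lemma ln_lt_sub1 : forall S, 0 < S -> S <> 1 -> ln S < S - 1.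
Proof.
  intros S HS H1.
  assert (Hl : ln S <> 0).
  { intro E. apply H1. rewrite <- (exp_ln S HS), E. apply exp_0. }
  pose proof (exp_ineq1 _ Hl) as H. rewrite exp_ln in H by exact HS. lra.
Qed.

Lemma ln_le_sub1 : forall S, 0 < S -> ln S <= S - 1.
Proof.
  intros S HS. destruct (Req_dec S 1) as [E|E].
  - subst. rewrite ln_1. lra.
  - left. apply ln_lt_sub1; auto.
Qed.

Lemma psi_nonneg : forall S, 0 < S -> 0 <= Psi S.
Proof. intros S HS. unfold Psi. pose proof (ln_le_sub1 S HS). lra. Qed.

Lemma psi_pos : forall S, 0 < S -> S <> 1 -> 0 < Psi S.
Proof. intros S HS H1. unfold Psi. pose proof (ln_lt_sub1 S HS H1). lra. Qed.

Lemma V_closed : forall X Y : R, 0 < X -> 0 < Y ->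
     V X Y = (X - 1) ^ 2 / X + (Y - 1 - ln Y) + (Y / X - 1 - ln (Y / X)).
Proof.
  intros X Y HX HY. unfold V, Psi. rewrite ln_Rinv by exact HX.
  field. lra.
Qed.

Lemma psi_comp : forall (g : R -> R) t l, derivable_pt_lim g t l -> 0 < g t ->
  derivable_pt_lim (fun s => Psi (g s)) t (l - l / g t).
Proof.
  intros g t l Hg Hp.
  assert (H := derivable_pt_lim_minus (fun s => g s - 1) (comp ln g) t (l - 0) (/ g t * l)
     (derivable_pt_lim_minus g (fct_cte 1) t l 0 Hg (derivable_pt_lim_const 1 t))
     (derivable_pt_lim_comp g ln t l (/ g t) Hg (derivable_pt_lim_ln _ Hp))).
  replace (l - l / g t) with (l - 0 - / g t * l) by (field; lra).
  exact H.
Qed.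

Lemma inv_comp : forall (g : R -> R) t l, derivable_pt_lim g t l -> g t <> 0 ->
  derivable_pt_lim (fun s => / g s) t (- l / (g t)²).
Proof.
  intros g t l Hg Hp.
  assert (H := derivable_pt_lim_div (fct_cte 1) g t 0 l (derivable_pt_lim_const 1 t) Hg Hp).
  apply derivable_pt_lim_ext with (f := (fct_cte 1 / g)%F).
  { intro z. unfold div_fct, fct_cte, Rdiv. ring. }
  replace (- l / (g t)²) with ((0 * g t - l * fct_cte 1 t) / (g t)²)
    by (unfold fct_cte, Rsqr; field; auto).
  exact H.
Qed.

Lemma dl_eq : forall f t l l', derivable_pt_lim f t l -> l = l' -> derivable_pt_lim f t l'.
Proof. intros; subst; auto. Qed.

Theorem theorem1 :
  (forall X Y : R, 0 < X -> 0 < Y ->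
     V X Y = (X - 1) ^ 2 / X + (Y - 1 - ln Y) + (Y / X - 1 - ln (Y / X))) /\
  (V 1 1 = 0 /\
   (forall X Y : R, 0 < X -> 0 < Y -> (X, Y) <> (1, 1) -> 0 < V X Y)) /\
  (forall M : R, exists delta Rr : R, 0 < delta /\
     forall X Y : R, 0 < X -> 0 < Y ->
       (X < delta \/ Y < delta \/ Rr < X + Y) -> M < V X Y) /\
  (forall (X Y : R -> R) (t : R), 0 < X t -> 0 < Y t ->
     derivable_pt_lim X t (fX (X t) (Y t)) ->
     derivable_pt_lim Y t (fY (X t) (Y t)) ->
     derivable_pt_lim (fun s => V (X s) (Y s)) t (Vdot (X t) (Y t))) /\
  (Vdot 1 1 = 0 /\
   (forall X Y : R, 0 < X -> 0 < Y -> (X, Y) <> (1, 1) -> Vdot X Y < 0)).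
Proof.
  split; [exact V_closed|].
  split.
  { split.
    - unfold V, Psi. replace (/1) with 1 by field. replace (1/1) with 1 by field.
      rewrite ln_1. ring.
    - intros X Y HX HY Hne. rewrite V_closed by auto.
      assert (HYX : 0 < Y / X) by (apply Rdiv_lt_0_compat; auto).
      pose proof (psi_nonneg _ HYX) as P3. pose proof (psi_nonneg _ HY) as P2.
      unfold Psi in P2, P3.
      destruct (Req_dec X 1) as [E|E].
      + subst. assert (Y <> 1) by (intro; subst; apply Hne; reflexivity).
        pose proof (psi_pos _ HY H) as P. unfold Psi in P.
        replace ((1-1)^2/1) with 0 by field. lra.
      + assert (0 < (X - 1) ^ 2 / X).
        { apply Rdiv_lt_0_compat; auto. assert (X - 1 <> 0) by lra.
          pose proof (Rsqr_pos_lt (X-1) H) as Q. unfold Rsqr in Q. simpl. lra. }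
        lra. }
  split.
  { intro M. set (K := Rabs M + 3).
    assert (HK : Rabs M + 3 <= K) by (unfold K; lra).
    pose proof (Rle_abs M) as HM.
    exists (Rmin (exp (- K)) (/ K)), (4 * K). split.
    { apply Rmin_glb_lt. apply exp_pos. apply Rinv_0_lt_compat. unfold K; pose proof (Rabs_pos M); lra. }
    intros X Y HX HY Hc.
    rewrite V_closed by auto.
    assert (HYX : 0 < Y / X) by (apply Rdiv_lt_0_compat; auto).
    pose proof (psi_nonneg _ HYX) as P3. pose proof (psi_nonneg _ HY) as P2.
    unfold Psi in P2, P3.
    assert (EA : (X - 1) ^ 2 / X = X + / X - 2) by (field; lra).
    assert (HiX : 0 < / X) by (apply Rinv_0_lt_compat; auto).
    assert (A0 : 0 <= (X - 1) ^ 2 / X).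
    { apply Rmult_le_pos; [apply pow2_ge_0 | lra]. }
    assert (K0 : 0 < K) by (pose proof (Rabs_pos M); lra).
    destruct Hc as [Hc|[Hc|Hc]].
    - assert (Hx : X < / K) by (eapply Rlt_le_trans; [exact Hc| apply Rmin_r]).
      assert (/ / K < / X) by (apply Rinv_lt_contravar; [apply Rmult_lt_0_compat; auto; apply Rinv_0_lt_compat; auto| exact Hx]).
      rewrite Rinv_inv in H. lra.
    - assert (Hy : Y < exp (- K)) by (eapply Rlt_le_trans; [exact Hc| apply Rmin_l]).
      pose proof (ln_increasing _ _ HY Hy) as L. rewrite ln_exp in L. lra.
    - destruct (Rlt_le_dec (2 * K) X) as [Hx|Hx].
      + lra.
      + assert (Hy : 2 * K <= Y) by lra.
        assert (L2 : ln 2 < 1) by (pose proof (ln_lt_sub1 2 ltac:(lra) ltac:(lra)); lra).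
        assert (LY : ln Y = ln 2 + ln (Y / 2)).
        { rewrite <- ln_mult by lra. f_equal. field. }
        pose proof (ln_le_sub1 (Y / 2) ltac:(lra)). lra. }
  split.
  { intros X Y t HX HY DX DY.
    pose proof (psi_comp X t _ DX HX) as h1.
    pose proof (psi_comp Y t _ DY HY) as h2.
    pose proof (psi_comp (fun s => / X s) t _ (inv_comp X t _ DX ltac:(lra))
      ltac:(apply Rinv_0_lt_compat; auto)) as h3.
    pose proof (psi_comp (fun s => Y s / X s) t _ (derivable_pt_lim_div Y X t _ _ DY DX ltac:(lra))
      ltac:(apply Rdiv_lt_0_compat; auto)) as h4.
    pose proof (derivable_pt_lim_plus _ _ _ _ _
       (derivable_pt_lim_plus _ _ _ _ _ (derivable_pt_lim_plus _ _ _ _ _ h1 h2) h3) h4) as H.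
    eapply dl_eq; [exact H|].
    unfold Vdot, fX, fY, Rsqr. field. lra. }
  split.
  { unfold Vdot. field. }
  intros X Y HX HY Hne. unfold Vdot.
  assert (A0 : 0 <= (X - 1) ^ 2 / X).
  { apply Rmult_le_pos; [apply pow2_ge_0 | left; apply Rinv_0_lt_compat; auto]. }
  pose proof (pow2_ge_0 (Y - 1)).
  destruct (Req_dec X 1) as [E|E].
  - subst. assert (Y - 1 <> 0) by (intro; apply Hne; f_equal; lra).
    pose proof (Rsqr_pos_lt (Y-1) H0) as Q. unfold Rsqr in Q. simpl. lra.
  - assert (0 < (X - 1) ^ 2 / X).
    { apply Rdiv_lt_0_compat; auto. assert (X - 1 <> 0) by lra.
      pose proof (Rsqr_pos_lt (X-1) H0) as Q. unfold Rsqr in Q. simpl. lra. }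
    lra.
Qed.
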